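(* Let $s\ge 3$, $b\ge1$, $n=sb$ and $V=\mathbb{F}_2^n=V_1\oplus\cdots\oplus V_b$ with $V_j\cong\mathbb{F}_2^s$ (the $j$-th block of $s$ consecutive coordinates). Let $\mathbf{b}\in\mathbb{F}_2^{s-2}$ be nonzero, let $\circ_{\mathbf b}$ be the operation on $\mathbb{F}_2^s$ given by $$x\circ_{\mathbf b} y=x+y+(x_1y_2+x_2y_1)\,(0,0,\mathbf{b}),$$ and let $\circ$ be the parallel operation on $V$ applying $\circ_{\mathbf b}$ on each block $V_j$. Let $\lambda\in\mathbb{F}_2^{n\times n}$ (acting on row vectors by $x\mapsto x\lambda$), and write $\lambda$ in $b\times b$ blocks of size $s\times s$, the $(i,j)$ block being further partitioned as $\begin{pmatrix}A_{ij}&B_{ij}\\ C_{ij}&D_{ij}\end{pmatrix}$ with $A_{ij}\in\mathbb{F}_2^{2\times2}$, $B_{ij}\in\mathbb{F}_2^{2\times(s-2)}$, $C_{ij}\in\mathbb{F}_2^{(s-2)\times2}$, $D_{ij}\in\mathbb{F}_2^{(s-2)\times(s-2)}$. Then $\lambda\in H_\circ$ if and only if: (1) for each block-row index $i$ there is exactly one $j$ with $A_{ij}\neq0$, and for each block-column index $j$ exactly one $i$ with $A_{ij}\ne 0$; moreover every nonzero $A_{ij}$ is invertible; (2) $B_{ij}$ are arbitrary; (3) $C_{ij}=0$ for all $i,j$; (4) for all $i,j$: if $A_{ij}=0$ then $\mathbf{b}D_{ij}=\mathbf{0}$, and if $A_{ij}$ is invertible then $\mathbf{b}D_{ij}=\mathbf{b}$;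 moreover the $b(s-2)\times b(s-2)$ matrix $D=(D_{ij})_{i,j}$ is invertible.
   Context: $+$ is xor on $V$. For an operation $\circ$ on $V$ making $(V,\circ)$ an elementary abelian $2$-group whose translations $x\mapsto x\circ a$ are xor-affine, $H_\circ$ denotes the group of maps $f\in\mathrm{GL}(V,+)$ such that $(a\circ b)f=af\circ bf$ for all $a,b\in V$ (maps written in postfix notation). The operation $\circ_{\mathbf b}$ is an alternative operation on $\mathbb{F}_2^s$ whose weak key space $\{k: x\circ_{\mathbf b}k=x+k\ \forall x\}$ is spanned by the last $s-2$ canonical vectors. *)

(* Defs.v *)
From mathcomp Require Import all_boot all_algebra.
Set Implicit Arguments. Unset Strict Implicit. Unset Printing Implicit Defensive.
Import GRing.Theory.
Local Open Scope ring_scope.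

(* Throughout, s = 2 + t (so s >= 3 iff t >= 1), and V = F_2^(b*s) is
   identified with b x s matrices via mxvec / vec_mx: coordinate
   mxvec_index j k (= j*s + k in the library's enumeration order) is the k-th coordinate of
   the j-th block V_j. *)


Definition circb (t : nat) (bv : 'rV['F_2]_t) (x y : 'rV['F_2]_(2 + t)) : 'rV['F_2]_(2 + t) :=
  x + y + (x 0 (lshift t (0 : 'I_2)) * y 0 (lshift t (1 : 'I_2))
           + x 0 (lshift t (1 : 'I_2)) * y 0 (lshift t (0 : 'I_2))) *: row_mx 0 bv.

Definition vblock (b t : nat) (x : 'rV['F_2]_(b * (2 + t))) (j : 'I_b) : 'rV['F_2]_(2 + t) :=
  row j (vec_mx x).

Definition circV (b t : nat) (bv : 'rV['F_2]_t) (x y : 'rV['F_2]_(b * (2 + t))) :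
  'rV['F_2]_(b * (2 + t)) :=
  mxvec (\matrix_(j < b) circb bv (vblock x j) (vblock y j)).

Definition in_H (b t : nat) (bv : 'rV['F_2]_t) (lam : 'M['F_2]_(b * (2 + t))) : Prop :=
  lam \in unitmx /\
  forall x y : 'rV['F_2]_(b * (2 + t)),
    circV bv x y *m lam = circV bv (x *m lam) (y *m lam).

Definition mblock (b t : nat) (lam : 'M['F_2]_(b * (2 + t))) (i j : 'I_b) : 'M['F_2]_(2 + t) :=
  \matrix_(k, l) lam (mxvec_index i k) (mxvec_index j l).

Definition Ablk b t (lam : 'M['F_2]_(b * (2 + t))) i j : 'M['F_2]_2 := ulsubmx (mblock lam i j).
Definition Bblk b t (lam : 'M['F_2]_(b * (2 + t))) i j : 'M['F_2]_(2, t) := ursubmx (mblock lam i j).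
Definition Cblk b t (lam : 'M['F_2]_(b * (2 + t))) i j : 'M['F_2]_(t, 2) := dlsubmx (mblock lam i j).
Definition Dblk b t (lam : 'M['F_2]_(b * (2 + t))) i j : 'M['F_2]_t := drsubmx (mblock lam i j).

Definition Dbig b t (lam : 'M['F_2]_(b * (2 + t))) : 'M['F_2]_(b * t) :=
  \matrix_(p, q) (let: isMxvecIndex i k := mxvec_indexP p in
                  let: isMxvecIndex j l := mxvec_indexP q in
                  Dblk lam i j k l).

(* Main.v *)
Require Import Defs.
From mathcomp Require Import all_boot all_algebra ring.
Set Implicit Arguments. Unset Strict Implicit. Unset Printing Implicit Defensive.
Import GRing.Theory.
Local Open Scope ring_scope.

Lemma F2_cases (x : 'F_2) : x = 0 \/ x = 1.
Proof. case: x => [[|[|m]] Hm]; [left|right|by []]; exact: val_inj. Qed.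

Lemma I2_cases (x : 'I_2) : x = 0 \/ x = 1.
Proof. case: x => [[|[|m]] Hm]; [left|right|by []]; exact: val_inj. Qed.

Lemma F2_two : (2%:R : 'F_2) = 0.
Proof. by apply/eqP. Qed.

Lemma F2_addxx (x : 'F_2) : x + x = 0.
Proof. by case: (F2_cases x) => ->; apply/eqP. Qed.

Lemma F2_opp (x : 'F_2) : - x = x.
Proof. by case: (F2_cases x) => ->; apply/eqP. Qed.

Lemma F2_neq0 (x : 'F_2) : x != 0 -> x = 1.
Proof. by case: (F2_cases x) => ->. Qed.

Lemma det2 (R : comRingType) (A : 'M[R]_2) : \det A = A 0 0 * A 1 1 - A 0 1 * A 1 0.
Proof.
rewrite (expand_det_row _ 0) !big_ord_recl big_ord0 addr0.
rewrite /cofactor !det_mx11 !mxE /=.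
rewrite !expr0 !expr1 !mul1r mulN1r mulrN.
by congr (A _ _ * A _ _ - A _ _ * A _ _); apply/val_inj.
Qed.

Lemma sum_mxvec (R : nmodType) m n (F : 'I_(m*n) -> R) :
  \sum_p F p = \sum_i \sum_j F (mxvec_index i j).
Proof.
rewrite pair_big /= (reindex (uncurry (@mxvec_index m n))) /=; last by apply: curry_mxvec_bij.
by apply: eq_bigr => -[i j].
Qed.

Lemma mxvec_index_eq m n (i i' : 'I_m) (k k' : 'I_n) :
  (mxvec_index i k == mxvec_index i' k') = (i == i') && (k == k').
Proof.
apply/eqP/andP => [E|[/eqP-> /eqP->]] //.
have [g h1 _] := curry_mxvec_bij m n.
move: (h1 (i, k) isT) (h1 (i', k') isT) => /=; rewrite E => -> [-> ->].
by rewrite !eqxx.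
Qed.

Lemma match_mxvec (T : Type) m n (F : 'I_m -> 'I_n -> T) (p : 'I_(m * n)) i k :
  p = mxvec_index i k ->
  match mxvec_indexP p in is_mxvec_index o return T with isMxvecIndex i' k' => F i' k' end
  = F i k.
Proof.
case: p / (mxvec_indexP p) => i' k' /eqP.
by rewrite mxvec_index_eq => /andP[/eqP-> /eqP->].
Qed.


Definition ia {b t : nat} (i : 'I_b) (a : 'I_2) : 'I_(b*(2+t)) := mxvec_index i (lshift t a).
Definition ir {b t : nat} (i : 'I_b) (c : 'I_t) : 'I_(b*(2+t)) := mxvec_index i (rshift 2 c).

Lemma DbigE b t (lam : 'M['F_2]_(b * (2 + t))) i j c d :
  Dbig lam (mxvec_index i c) (mxvec_index j d) = Dblk lam i j c d.
Proof.
rewrite mxE.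
rewrite (@match_mxvec _ _ _ (fun i' c' => match mxvec_indexP (mxvec_index j d) in is_mxvec_index o return 'F_2 with isMxvecIndex j0 l =>
                  Dblk lam i' j0 c' l end) _ i c erefl).
by rewrite (@match_mxvec _ _ _ (fun j' d' => Dblk lam i j' c d') _ j d erefl).
Qed.

Lemma AblkE b t (lam : 'M['F_2]_(b * (2 + t))) i j a a' :
  Ablk lam i j a a' = lam (ia i a) (ia j a').
Proof. by rewrite /Ablk /mblock !mxE. Qed.
Lemma CblkE b t (lam : 'M['F_2]_(b * (2 + t))) i j c a :
  Cblk lam i j c a = lam (ir i c) (ia j a).
Proof. by rewrite /Cblk /mblock !mxE. Qed.
Lemma DblkE b t (lam : 'M['F_2]_(b * (2 + t))) i j c d :
  Dblk lam i j c d = lam (ir i c) (ir j d).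
Proof. by rewrite /Dblk /mblock !mxE. Qed.

Definition om {b t : nat} (x y : 'rV['F_2]_(b * (2 + t))) (j : 'I_b) : 'F_2 :=
  x 0 (ia j 0) * y 0 (ia j 1) + x 0 (ia j 1) * y 0 (ia j 0).

Definition rr {t : nat} (bv : 'rV['F_2]_t) : 'rV['F_2]_(2 + t) := row_mx 0 bv.

Definition Phi {b t : nat} (bv : 'rV['F_2]_t) (x y : 'rV['F_2]_(b * (2 + t))) : 'rV['F_2]_(b * (2 + t)) :=
  mxvec (\matrix_(j, k) (om x y j * rr bv 0 k)).

Lemma PhiE b t (bv : 'rV['F_2]_t) (x y : 'rV['F_2]_(b * (2 + t))) j k :
  Phi bv x y 0 (mxvec_index j k) = om x y j * rr bv 0 k.
Proof. by rewrite mxvecE mxE. Qed.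

Lemma rrl t (bv : 'rV['F_2]_t) a : rr bv 0 (lshift t a) = 0.
Proof. by rewrite /rr row_mxEl mxE. Qed.
Lemma rrr t (bv : 'rV['F_2]_t) c : rr bv 0 (rshift 2 c) = bv 0 c.
Proof. by rewrite /rr row_mxEr. Qed.

Lemma circV_Phi b t (bv : 'rV['F_2]_t) (x y : 'rV['F_2]_(b * (2 + t))) :
  circV bv x y = x + y + Phi bv x y.
Proof.
apply/rowP => p; case/mxvec_indexP: p => j k.
rewrite /circV mxvecE !mxE PhiE /vblock /om !mxE.
by [].
Qed.

Lemma in_H_Phi b t (bv : 'rV['F_2]_t) (lam : 'M['F_2]_(b * (2 + t))) :
  in_H bv lam <-> lam \in unitmx /\
     forall x y, Phi bv x y *m lam = Phi bv (x *m lam) (y *m lam).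
Proof.
rewrite /in_H; split => -[U H]; split => // x y; move: (H x y);
  rewrite !circV_Phi !mulmxDl.
  by move/addrI.
by move=> ->.
Qed.

Lemma mulE b t m n (A : 'M['F_2]_(m, b * (2 + t))) (B : 'M['F_2]_(b * (2 + t), n)) p q :
  (A *m B) p q = \sum_l (\sum_a A p (ia l a) * B (ia l a) q + \sum_d A p (ir l d) * B (ir l d) q).
Proof.
by rewrite mxE sum_mxvec; apply: eq_bigr => l _; rewrite big_split_ord.
Qed.

Definition G {b t : nat} (bv : 'rV['F_2]_t) (lam : 'M['F_2]_(b * (2 + t))) l j k :=
  \sum_c bv 0 c * lam (ir l c) (mxvec_index j k).

Lemma PhiM b t (bv : 'rV['F_2]_t) (lam : 'M['F_2]_(b * (2 + t))) x y j k :
  (Phi bv x y *m lam) 0 (mxvec_index j k) = \sum_l om x y l * G bv lam l j k.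
Proof.
rewrite mulE; apply: eq_bigr => l _.
rewrite big1 ?add0r => [|a _]; last by rewrite /ia PhiE rrl mulr0 mul0r.
rewrite /G mulr_sumr; apply: eq_bigr => c _.
by rewrite /ir PhiE rrr mulrA.
Qed.

Lemma HPhi_iff b t (bv : 'rV['F_2]_t) (lam : 'M['F_2]_(b * (2 + t))) :
  (forall x y, Phi bv x y *m lam = Phi bv (x *m lam) (y *m lam)) <->
  (forall x y j k, \sum_l om x y l * G bv lam l j k = om (x *m lam) (y *m lam) j * rr bv 0 k).
Proof.
split => H x y.
  by move=> j k; rewrite -PhiM H PhiE.
by apply/rowP => p; case/mxvec_indexP: p => j k; rewrite PhiM PhiE H.
Qed.

Lemma orth2 (x y a b c d : 'F_2) : x * b + y * a = 0 -> x * d + y * c = 0 -> a * d + b * c = 1 -> x = 0 /\ y = 0.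
Proof.
move=> /eqP h1 /eqP h2 /eqP h3.
move: h1 h2 h3.
by case: (F2_cases x) => ->; case: (F2_cases y) => ->; case: (F2_cases a) => ->; case: (F2_cases b) => ->; case: (F2_cases c) => ->; case: (F2_cases d) => ->.
Qed.

Lemma degen (I : Type) (u v : I -> 'F_2) p : (exists q, u q != 0) -> (exists q, v q != 0) ->
  (exists q, u q != v q) -> (forall q, u p * v q + v p * u q = 0) -> u p = 0 /\ v p = 0.
Proof.
move=> [q1 h1] [q2 h2] [q3 h3] H.
case: (F2_cases (u p)) => e1; case: (F2_cases (v p)) => e2; rewrite e1 e2 in H * => //.
- by move: (H q1); rewrite mul0r add0r mul1r => e; rewrite e eqxx in h1.
- by move: (H q2); rewrite mul0r addr0 mul1r => e; rewrite e eqxx in h2.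
- move: (H q3); rewrite !mul1r => /eqP; rewrite addr_eq0 F2_opp => /eqP e.
  by rewrite e eqxx in h3.
Qed.

Lemma dE n (p r : 'I_n) : (delta_mx 0 p : 'rV['F_2]_n) 0 r = (r == p)%:R.
Proof. by rewrite mxE. Qed.

Lemma ia_eq b t (l i : 'I_b) a a' : (@ia b t l a == ia i a') = (l == i) && (a == a').
Proof. by rewrite /ia mxvec_index_eq eq_lshift. Qed.
Lemma ir_eq b t (l i : 'I_b) c c' : (@ir b t l c == ir i c') = (l == i) && (c == c').
Proof. by rewrite /ir mxvec_index_eq eq_rshift. Qed.
Lemma ia_ir b t (l i : 'I_b) a c : (@ia b t l a == ir i c) = false.
Proof. by rewrite /ia /ir mxvec_index_eq eq_lrshift andbF. Qed.
Lemma ir_ia b t (l i : 'I_b) a c : (@ir b t i c == ia l a) = false.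
Proof. by rewrite eq_sym ia_ir. Qed.

Definition w {b t : nat} (lam : 'M['F_2]_(b * (2 + t))) p q j :=
  lam p (ia j 0) * lam q (ia j 1) + lam p (ia j 1) * lam q (ia j 0).

Lemma omrow b t (lam : 'M['F_2]_(b * (2 + t))) p q j :
  om (row p lam) (row q lam) j = w lam p q j.
Proof. by rewrite /om !mxE. Qed.

Lemma wsym b t (lam : 'M['F_2]_(b * (2 + t))) p q j : w lam p q j = w lam q p j.
Proof. rewrite /w; ring. Qed.

Lemma bv_nz t (bv : 'rV['F_2]_t) : bv != 0 -> exists c, bv 0 c != 0.
Proof.
move=> hbv; have : ~~ [forall c, bv 0 c == 0].
  apply: contra hbv => /forallP h; apply/eqP/rowP => c; rewrite mxE; exact/eqP/h.
by rewrite negb_forall => /existsP.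
Qed.

Lemma nec_pair b t (bv : 'rV['F_2]_t) (lam : 'M['F_2]_(b * (2 + t))) :
  (forall x y, Phi bv x y *m lam = Phi bv (x *m lam) (y *m lam)) ->
  forall i j k, G bv lam i j k = w lam (ia i 0) (ia i 1) j * rr bv 0 k.
Proof.
move/HPhi_iff => H i j k.
have := H (delta_mx 0 (ia i 0)) (delta_mx 0 (ia i 1)) j k.
rewrite -!rowE omrow => <-.
rewrite (bigD1 i) //= big1 ?addr0.
  by rewrite /om !dE !ia_eq !eqxx /= mulr1 mul0r addr0 mul1r.
move=> l nl; rewrite /om !dE !ia_eq (negbTE nl) /=.
by rewrite !mul0r add0r mul0r.
Qed.

Lemma nec_w b t (bv : 'rV['F_2]_t) (hbv : bv != 0) (lam : 'M['F_2]_(b * (2 + t))) :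
  (forall x y, Phi bv x y *m lam = Phi bv (x *m lam) (y *m lam)) ->
  forall p q j, (forall l, om (delta_mx 0 p) (delta_mx 0 q) l = 0) -> w lam p q j = 0.
Proof.
move/HPhi_iff => H p q j h0.
have [c hc] := bv_nz hbv.
have := H (delta_mx 0 p) (delta_mx 0 q) j (rshift 2 c).
rewrite big1 => [|l _]; last by rewrite h0 mul0r.
rewrite -!rowE omrow rrr => /eqP; rewrite eq_sym mulf_eq0 (negbTE hc) orbF.
by move/eqP.
Qed.

Lemma nec_N1 b t (bv : 'rV['F_2]_t) (hbv : bv != 0) (lam : 'M['F_2]_(b * (2 + t))) :
  (forall x y, Phi bv x y *m lam = Phi bv (x *m lam) (y *m lam)) ->
  forall i c q j, w lam (ir i c) q j = 0.
Proof.
move=> H i c q j; apply: (nec_w hbv H) => l.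
by rewrite /om !dE !ia_ir !mul0r add0r.
Qed.

Lemma nec_N2 b t (bv : 'rV['F_2]_t) (hbv : bv != 0) (lam : 'M['F_2]_(b * (2 + t))) :
  (forall x y, Phi bv x y *m lam = Phi bv (x *m lam) (y *m lam)) ->
  forall i i' a a' j, i != i' -> w lam (ia i a) (ia i' a') j = 0.
Proof.
move=> H i i' a a' j ne; apply: (nec_w hbv H) => l.
rewrite /om !dE !ia_eq.
case: (eqVneq l i) => [->|nl] /=; last by rewrite !mul0r add0r.
by rewrite eq_sym (negbTE ne) /= !mulr0 addr0.
Qed.

Lemma coldiff n (lam : 'M['F_2]_n) c c' : lam \in unitmx -> c != c' ->
  exists p, lam p c != lam p c'.
Proof.
move=> U ne; apply/existsP; rewrite -negb_forall; apply/negP => /forallP h.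
have E : lam *m (delta_mx c 0 - delta_mx c' 0 : 'cV_n) = 0.
  by rewrite mulmxBr -!colE; apply/eqP; rewrite subr_eq0; apply/eqP/colP => p; rewrite !mxE; apply/eqP; rewrite -[_ == _]negbK h.
have := congr1 (mulmx (invmx lam)) E.
rewrite mulmxA mulVmx // mul1mx mulmx0 => /matrixP /(_ c 0).
by rewrite !mxE !eqxx (negbTE ne) /= subr0 => /eqP; rewrite oner_eq0.
Qed.

Lemma colnz n (lam : 'M['F_2]_n) c : lam \in unitmx -> exists p, lam p c != 0.
Proof.
move=> U; apply/existsP; rewrite -negb_forall; apply/negP => /forallP h.
have E : lam *m (delta_mx c 0 : 'cV_n) = 0.
  by rewrite -colE; apply/colP => p; rewrite !mxE; apply/eqP; rewrite -[_ == _]negbK h.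
have := congr1 (mulmx (invmx lam)) E.
rewrite mulmxA mulVmx // mul1mx mulmx0 => /matrixP /(_ c 0).
by rewrite !mxE !eqxx /= => /eqP; rewrite oner_eq0.
Qed.

Lemma col_struct b t (lam : 'M['F_2]_(b * (2 + t))) j : lam \in unitmx ->
  (forall i c q, w lam (ir i c) q j = 0) ->
  (forall i i' a a', i != i' -> w lam (ia i a) (ia i' a') j = 0) ->
  (forall i c a, lam (ir i c) (ia j a) = 0) /\
  exists i0, w lam (ia i0 0) (ia i0 1) j = 1 /\
     forall i, i != i0 -> forall a a', lam (ia i a) (ia j a') = 0.
Proof.
move=> U N1 N2.
set u := fun q => lam q (ia j 0); set v := fun q => lam q (ia j 1).
have hu : exists q, u q != 0 by exact: colnz.
have hv : exists q, v q != 0 by exact: colnz.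
have huv : exists q, u q != v q by apply: coldiff; rewrite // ia_eq eqxx.
split.
  move=> i c a; have [h0 h1] := degen hu hv huv (fun q => N1 i c q).
  by case: (I2_cases a) => ->.
case: (boolP [exists i, w lam (ia i 0) (ia i 1) j == 1]).
  case/existsP => i0 /eqP h; exists i0; split => // i ne a a'.
  have [h0 h1] := orth2 (N2 i i0 a 0 ne) (N2 i i0 a 1 ne) h.
  by case: (I2_cases a') => ->.
rewrite negb_exists => /forallP hn.
have hd i : w lam (ia i 0) (ia i 1) j = 0.
  by case: (F2_cases (w lam (ia i 0) (ia i 1) j)) => // e; move: (hn i); rewrite e eqxx.
have allw p q : w lam p q j = 0.
  case/mxvec_indexP: p => i k; case/mxvec_indexP: q => i' k'.
  rewrite -[k]splitK -[k']splitK; case: (split k) => a; case: (split k') => a' /=; last first.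
  - exact: N1.
  - exact: N1.
  - by rewrite wsym; apply: N1.
  case: (eqVneq i i') => [<-|ne]; last exact: N2.
  case: (I2_cases a) => ->; case: (I2_cases a') => ->.
  - by rewrite /w mulrC F2_addxx.
  - exact: hd.
  - by rewrite wsym; apply: hd.
  - by rewrite /w mulrC F2_addxx.
case: (hu) => p hp.
have [h0 _] := degen hu hv huv (fun q => allw p q).
by rewrite h0 eqxx in hp.
Qed.

Lemma detA b t (lam : 'M['F_2]_(b * (2 + t))) i j :
  \det (Ablk lam i j) = w lam (ia i 0) (ia i 1) j.
Proof. by rewrite det2 !AblkE /w F2_opp. Qed.

Lemma unitA b t (lam : 'M['F_2]_(b * (2 + t))) i j :
  (Ablk lam i j \in unitmx) = (w lam (ia i 0) (ia i 1) j != 0).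
Proof. by rewrite unitmxE unitfE detA. Qed.

Lemma Ablk0 b t (lam : 'M['F_2]_(b * (2 + t))) i j :
  (Ablk lam i j = 0) <-> (forall a a', lam (ia i a) (ia j a') = 0).
Proof.
split => [h a a'|h]; first by rewrite -AblkE h mxE.
by apply/matrixP => a a'; rewrite AblkE h mxE.
Qed.

Lemma bvD b t (bv : 'rV['F_2]_t) (lam : 'M['F_2]_(b * (2 + t))) i j c :
  (bv *m Dblk lam i j) 0 c = G bv lam i j (rshift 2 c).
Proof. by rewrite mxE /G; apply: eq_bigr => d _; rewrite DblkE. Qed.

Lemma F2id (x0 x1 y0 y1 a00 a01 a10 a11 : 'F_2) : a00 * a11 + a01 * a10 = 1 ->
  (x0*a00 + x1*a10) * (y0*a01 + y1*a11) + (x0*a01 + x1*a11) * (y0*a00+y1*a10) = x0*y1 + x1*y0.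
Proof.
move=> h.
transitivity ((x0*y1 + x1*y0) * (a00*a11 + a01*a10) + 2%:R * (x0*y0*a00*a01 + x1*y1*a10*a11)).
  ring.
by rewrite h F2_two mul0r addr0 mulr1.
Qed.

Lemma Dbig_mul b t (lam mu : 'M['F_2]_(b * (2 + t))) :
  (forall i j c a, lam (ir i c) (ia j a) = 0) -> lam *m mu = 1%:M ->
  Dbig lam *m Dbig mu = 1%:M.
Proof.
move=> hC E; apply/matrixP => p q.
case/mxvec_indexP: p => i c; case/mxvec_indexP: q => i' c'.
have := congr1 (fun M : 'M_(b * (2 + t)) => M (ir i c) (ir i' c')) E => /=.
rewrite mulE => E'.
rewrite mxE sum_mxvec.
transitivity ((1%:M : 'M['F_2]_(b * (2 + t))) (ir i c) (ir i' c')).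
  rewrite -E'; symmetry; apply: eq_bigr => l _.
  rewrite big1 ?add0r => [|a _]; last by rewrite hC mul0r.
  by apply: eq_bigr => d _; rewrite !DbigE !DblkE.
by rewrite !mxE ir_eq mxvec_index_eq.
Qed.

Lemma xlamA b t (lam : 'M['F_2]_(b * (2 + t))) (f : 'I_b -> 'I_b) :
  (forall i j c a, lam (ir i c) (ia j a) = 0) ->
  (forall i j, i != f j -> forall a a', lam (ia i a) (ia j a') = 0) ->
  forall (x : 'rV['F_2]_(b * (2 + t))) j a,
  (x *m lam) 0 (ia j a) = \sum_a' x 0 (ia (f j) a') * lam (ia (f j) a') (ia j a).
Proof.
move=> hC hz x j a.
rewrite mulE (bigD1 (f j)) //= [X in _ + X]big1 => [|l nl].
  rewrite addr0 [X in _ + X]big1 ?addr0 // => d _.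
  by rewrite hC mulr0.
rewrite big1 ?add0r => [|a' _]; last by rewrite hz // mulr0.
by rewrite big1 // => d _; rewrite hC mulr0.
Qed.

Lemma sum2 (F : 'I_2 -> 'F_2) : \sum_a F a = F 0 + F 1.
Proof.
rewrite big_ord_recl big_ord1; congr (F _ + F _); exact: val_inj.
Qed.

Unset Implicit Arguments.
Set Strict Implicit.

Theorem theorem5 (t b : nat) (ht : (1 <= t)%N) (hb : (1 <= b)%N)
  (bv : 'rV['F_2]_t) (hbv : bv != 0) (lam : 'M['F_2]_(b * (2 + t))) :
  in_H bv lam <->
  [/\ (* (1) *)
      [/\ (forall i : 'I_b, exists! j : 'I_b, Ablk lam i j != 0),
          (forall j : 'I_b, exists! i : 'I_b, Ablk lam i j != 0)
        & (forall i j : 'I_b, Ablk lam i j != 0 -> Ablk lam i j \in unitmx)],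
      (* (2) B_ij arbitrary: no condition; (3) *)
      (forall i j : 'I_b, Cblk lam i j = 0),
      (* (4) *)
      (forall i j : 'I_b,
          (Ablk lam i j = 0 -> bv *m Dblk lam i j = 0) /\
          (Ablk lam i j \in unitmx -> bv *m Dblk lam i j = bv))
    & Dbig lam \in unitmx].
Proof.
split.
- move/in_H_Phi => [U H].
  set mu := invmx lam.
  have Umu : mu \in unitmx by rewrite unitmx_inv.
  have Hmu : forall x y, Phi bv x y *m mu = Phi bv (x *m mu) (y *m mu).
    move=> x y; have e := H (x *m mu) (y *m mu).
    rewrite -!mulmxA mulVmx // !mulmx1 in e.
    by rewrite -e -mulmxA mulmxV // mulmx1.
  have CS j := col_struct (j:=j) U (fun i c q => nec_N1 hbv H i c q j)
                 (fun i i' a a' ne => nec_N2 hbv H a a' j ne).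
  have CSmu j := col_struct (j:=j) Umu (fun i c q => nec_N1 hbv Hmu i c q j)
                 (fun i i' a a' ne => nec_N2 hbv Hmu a a' j ne).
  have hC i j c a : lam (ir i c) (ia j a) = 0 by case: (CS j) => h _; exact: h.
  have hCmu i j c a : mu (ir i c) (ia j a) = 0 by case: (CSmu j) => h _; exact: h.
  have /fin_all_exists [f hf] : forall j, exists i0, w lam (ia i0 0) (ia i0 1) j = 1 /\
     forall i, i != i0 -> forall a a', lam (ia i a) (ia j a') = 0.
    by move=> j; case: (CS j).
  have hf1 j : w lam (ia (f j) 0) (ia (f j) 1) j = 1 by case: (hf j).
  have hz i j : i != f j -> forall a a', lam (ia i a) (ia j a') = 0 by case: (hf j) => _; apply.
  have hAnz j : Ablk lam (f j) j != 0.
    apply/eqP => /Ablk0 h0; move: (hf1 j); rewrite /w !h0 mul0r add0r => /eqP.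
    by rewrite eq_sym oner_eq0.
  have hAi i j : Ablk lam i j != 0 -> i = f j.
    move=> h; apply/eqP; apply: contraR h => ne; apply/eqP/Ablk0; exact: hz.
  have hrow i : exists j, f j = i.
    have [j /eqP ej|none] := pickP (fun j => f j == i); first by exists j.
    have hz' j a a' : lam (ia i a) (ia j a') = 0.
      by apply: hz; rewrite eq_sym; move: (none j) => /= ->.
    have := mulmxV U; move/matrixP/(_ (ia i 0) (ia i 0)).
    rewrite mulE !mxE eqxx big1 => [/eqP|l _]; first by rewrite eq_sym oner_eq0.
    rewrite big1 ?add0r => [|a _]; last by rewrite hz' mul0r.
    by rewrite big1 // => d _; rewrite hCmu mulr0.
  have /fin_all_exists [g hg] := hrow.
  have ginj : injective g by apply: (can_inj hg).
  have [g' gK g'K] := injF_bij ginj.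
  have fE j : f j = g' j by rewrite -{1}(g'K j) hg.
  split; [split| | |].
  + move=> i; exists (g i); split; first by rewrite -{1}(hg i); exact: hAnz.
    move=> j' /hAi ->; by rewrite fE g'K.
  + move=> j; exists (f j); split; first exact: hAnz.
    by move=> i' /hAi ->.
  + move=> i j /hAi ->; rewrite unitA hf1; exact: oner_neq0.
  + by move=> i j; apply/matrixP => c a; rewrite CblkE hC mxE.
  + move=> i j; split.
      move/Ablk0 => h0; apply/rowP => c; rewrite bvD (nec_pair H) rrr /w !h0 mxE.
      by rewrite !mul0r add0r mul0r.
    rewrite unitA => /F2_neq0 h1; apply/rowP => c.
    by rewrite bvD (nec_pair H) rrr h1 mul1r.
  + have [] := mulmx1_unit (Dbig_mul (mu := mu) hC (mulmxV U)) => //.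
- move=> [[R1 R2 R3] HC HD UD]; apply/in_H_Phi.
  have hC i j c a : lam (ir i c) (ia j a) = 0.
    by rewrite -CblkE HC mxE.
  have /fin_all_exists [f hf] := R2.
  have hAi i j : Ablk lam i j != 0 -> f j = i by case: (hf j) => _; apply.
  have hz i j : i != f j -> forall a a', lam (ia i a) (ia j a') = 0.
    move=> ne; apply/Ablk0; apply/eqP; apply: contraR ne => /hAi ->; by [].
  have hU j : Ablk lam (f j) j \in unitmx by apply: R3; case: (hf j).
  have hw1 j : w lam (ia (f j) 0) (ia (f j) 1) j = 1 by apply: F2_neq0; rewrite -unitA.
  have xA := @xlamA b t lam f hC hz.
  split.
    rewrite -row_free_unit; apply: inj_row_free => x hx.
    have hA0 j a : x 0 (ia (f j) a) = 0.
      set xr := \row_a' x 0 (ia (f j) a').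
      have E : xr *m Ablk lam (f j) j = 0.
        apply/rowP => a0; rewrite !mxE.
        transitivity ((x *m lam) 0 (ia j a0)); last by rewrite hx mxE.
        rewrite xA.
        by apply: eq_bigr => a' _; rewrite AblkE mxE.
      have := congr1 (mulmx^~ (invmx (Ablk lam (f j) j))) E.
      rewrite mulmxK // mul0mx => /rowP /(_ a); by rewrite !mxE.
    have hA i a : x 0 (ia i a) = 0.
      by case: (R1 i) => j [/hAi <- _]; apply: hA0.
    have hD i d : x 0 (ir i d) = 0.
      set xr := mxvec (\matrix_(l, d) x 0 (ir l d)) : 'rV_(b * t).
      have E : xr *m Dbig lam = 0.
        apply/rowP => q; case/mxvec_indexP: q => j c.
        rewrite mxE [RHS]mxE.
        transitivity ((x *m lam) 0 (ir j c)); last by rewrite hx mxE.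
        rewrite mulE sum_mxvec.
        symmetry; apply: eq_bigr => l _; rewrite big1 ?add0r => [|a _]; last by rewrite hA mul0r.
        by apply: eq_bigr => d' _; rewrite mxvecE mxE DbigE DblkE.
      have := congr1 (mulmx^~ (invmx (Dbig lam))) E.
      rewrite mulmxK // mul0mx => /rowP /(_ (mxvec_index i d)).
      by rewrite mxvecE !mxE.
    apply/rowP => p; case/mxvec_indexP: p => i k; rewrite -[k]splitK mxE.
    by case: (split k) => a /=; [apply: hA | apply: hD].
  apply/HPhi_iff => x y j k; rewrite -[k]splitK; case: (split k) => a /=.
    rewrite rrl mulr0 big1 // => l _; rewrite /G big1 ?mulr0 // => c _.
    by rewrite hC mulr0.
  rewrite rrr (bigD1 (f j)) //= big1 ?addr0 => [|l nl]; last first.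
    rewrite -bvD (proj1 (HD l j)) ?mxE ?mulr0 //; apply/Ablk0; exact: hz.
  rewrite -bvD (proj2 (HD (f j) j)) //; congr (_ * _).
  rewrite /om !xA !sum2.
  by symmetry; apply: F2id; exact: hw1.
Qed.
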